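(* Let $r_I>r_0>0$, $v_1,v_2>0$, $w_V>0$ and $w_I$ be real numbers with $\frac{r_0 w_V v_2}{r_I(v_1+v_2)}<w_I<\frac{w_V v_2}{v_1+v_2}$. Let $n\ge 1$ be an integer and $l_1,\dots,l_{n-1}\ge 0$ be real numbers. Consider the optimization problem (P) described in the context. Then the optimal value of (P) satisfies $$\left(\sum_{i=1}^{n}Y_i\right)^*\ge \sum_{i=1}^{n-1}\min\left\{\frac{l_i}{v_2}w_I,\frac{2r_0}{v_1+v_2}w_V\right\}+\frac{2r_0}{v_1+v_2}w_V .$$ Moreover, this lower bound is attained by the feasible point $$D_i^*=\frac{\min\{l_i,2r_I\}}{v_2}w_I,\quad Y_i^*=\min\left\{\frac{l_i w_I}{v_2},\frac{2r_0 w_V}{v_1+v_2}\right\}\ (i=1,\dots,n-1),\qquad D_n^*=\frac{2r_I}{v_2}w_I,\quad Y_n^*=\frac{2r_0}{v_1+v_2}w_V .$$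
   Context: Model: a vehicle of interest (VoI) moving at speed $v_1$ receives data from $n$ ''helper'' vehicles moving in the opposite direction at speed $v_2$; consecutive helpers are at distances $l_1,\dots,l_{n-1}$; helpers download from an infrastructure point of radio range $r_I$ at rate $w_I$, and deliver to the VoI over vehicle links of range $r_0$ at rate $w_V$. $D_i$ is the amount of data helper $i$ receives from the infrastructure and $Y_i$ the amount it delivers to the VoI. The optimization problem (P), over real variables $D_1,\dots,D_n,Y_1,\dots,Y_n$, is: maximize $\sum_{i=1}^n Y_i$ subject to (i) $0\le D_i\le \frac{2r_I}{v_2}w_I$ for $i=1,\dots,n$; (ii) $\sum_{i=k_1}^{k_2}D_i\le \frac{\sum_{i=k_1}^{k_2-1}\min\{l_i,2r_I\}+2r_I}{v_2}w_I$ for all $1\le k_1\le k_2\le n$; (iii) $0\le Y_i\le \frac{2r_0}{v_1+v_2}w_V$ for $i=1,\dots,n$; (iv) $Y_i\le D_i$ for $i=1,\dots,n$; (v) $\sum_{i=k_1}^{k_2}Y_i\le \frac{\sum_{i=k_1}^{k_2-1}\min\{l_i,2r_0\}+2r_0}{v_1+v_2}w_V$ for all $1\le k_1\le k_2\le n$. (Empty sums are zero.) *)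

(* Defs.v *)
From mathcomp Require Import all_boot all_order all_algebra.
Set Implicit Arguments. Unset Strict Implicit. Unset Printing Implicit Defensive.
Import Order.TTheory GRing.Theory Num.Theory.
Local Open Scope ring_scope.

(* Indices are 1-based as in the paper: helper i for 1 <= i <= n,
   distances l i for 1 <= i <= n-1.  D, Y, l are functions nat -> R; their
   values outside the relevant index ranges play no role. *)

Definition feasible (R : realFieldType) (n : nat) (rI r0 v1 v2 wI wV : R)
    (l D Y : nat -> R) : Prop :=
  (forall i : nat, (1 <= i <= n)%N -> 0 <= D i /\ D i <= 2 * rI / v2 * wI) /\
  (forall k1 k2 : nat, (1 <= k1)%N -> (k1 <= k2)%N -> (k2 <= n)%N ->
     \sum_(k1 <= i < k2.+1) D i <=
       (\sum_(k1 <= i < k2) Num.min (l i) (2 * rI) + 2 * rI) / v2 * wI) /\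
  (forall i : nat, (1 <= i <= n)%N ->
     0 <= Y i /\ Y i <= 2 * r0 / (v1 + v2) * wV) /\
  (forall i : nat, (1 <= i <= n)%N -> Y i <= D i) /\
  (forall k1 k2 : nat, (1 <= k1)%N -> (k1 <= k2)%N -> (k2 <= n)%N ->
     \sum_(k1 <= i < k2.+1) Y i <=
       (\sum_(k1 <= i < k2) Num.min (l i) (2 * r0) + 2 * r0) / (v1 + v2) * wV).

Definition objective (R : realFieldType) (n : nat) (Y : nat -> R) : R :=
  \sum_(1 <= i < n.+1) Y i.

Definition Dstar (R : realFieldType) (n : nat) (rI v2 wI : R) (l : nat -> R)
    (i : nat) : R :=
  if (i < n)%N then Num.min (l i) (2 * rI) / v2 * wI else 2 * rI / v2 * wI.

Definition Ystar (R : realFieldType) (n : nat) (r0 v1 v2 wI wV : R)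
    (l : nat -> R) (i : nat) : R :=
  if (i < n)%N then Num.min (l i * wI / v2) (2 * r0 * wV / (v1 + v2))
  else 2 * r0 / (v1 + v2) * wV.

Definition lower_bound (R : realFieldType) (n : nat) (r0 v1 v2 wI wV : R)
    (l : nat -> R) : R :=
  \sum_(1 <= i < n) Num.min (l i / v2 * wI) (2 * r0 / (v1 + v2) * wV)
  + 2 * r0 / (v1 + v2) * wV.

(* Main.v *)
Require Import Defs.
From mathcomp Require Import all_boot all_order all_algebra.
From mathcomp Require Import ring lra.
Import Order.TTheory GRing.Theory Num.Theory.
Local Open Scope ring_scope.

Theorem theorem3 (R : realFieldType) (rI r0 v1 v2 wV wI : R) (n : nat)
    (l : nat -> R) :
  0 < r0 -> r0 < rI -> 0 < v1 -> 0 < v2 -> 0 < wV ->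
  r0 * wV * v2 / (rI * (v1 + v2)) < wI -> wI < wV * v2 / (v1 + v2) ->
  (1 <= n)%N ->
  (forall i : nat, (1 <= i <= n.-1)%N -> 0 <= l i) ->
  (forall M : R,
     (forall D Y : nat -> R, feasible n rI r0 v1 v2 wI wV l D Y ->
        objective n Y <= M) ->
     lower_bound n r0 v1 v2 wI wV l <= M) /\
  feasible n rI r0 v1 v2 wI wV l (Dstar n rI v2 wI l) (Ystar n r0 v1 v2 wI wV l) /\
  objective n (Ystar n r0 v1 v2 wI wV l) = lower_bound n r0 v1 v2 wI wV l.
Proof.
move=> r0p r0rI v1p v2p wVp hlo hhi n1 lpos.
have s12 : 0 < v1 + v2 by lra.
have rIp : 0 < rI by lra.
have wIp : 0 < wI.
  apply: lt_trans hlo; apply: divr_gt0; apply: mulr_gt0 => //; exact: mulr_gt0.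
set c := 2 * r0 / (v1 + v2) * wV.
have cE : 2 * r0 * wV / (v1 + v2) = c by rewrite /c mulrAC.
have cp : 0 <= c by rewrite /c; apply: mulr_ge0; [apply: divr_ge0|]; lra.
have c_lt : c < 2 * rI / v2 * wI.
  rewrite -subr_gt0.
  have -> : 2 * rI / v2 * wI - c =
     2 * (wI * (rI * (v1 + v2)) - r0 * wV * v2) / (v2 * (v1 + v2)).
    rewrite /c; field; apply/andP; split; lra.
  apply: divr_gt0; last exact: mulr_gt0.
  apply: mulr_gt0; first lra.
  rewrite subr_gt0 -ltr_pdivrMr //; exact: mulr_gt0.
have ab : wI / v2 <= wV / (v1 + v2).
  rewrite -subr_ge0.
  have -> : wV / (v1 + v2) - wI / v2 = (wV * v2 / (v1 + v2) - wI) / v2.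
    field; apply/andP; split; lra.
  apply: divr_ge0; lra.
have YE : forall i, Ystar n r0 v1 v2 wI wV l i =
   if (i < n)%N then Num.min (l i / v2 * wI) c else c.
  by move=> i; rewrite /Ystar cE mulrAC.
have obj : objective n (Ystar n r0 v1 v2 wI wV l) = lower_bound n r0 v1 v2 wI wV l.
  rewrite /objective /lower_bound -/c.
  case: n n1 lpos YE => // m _ _ YE.
  rewrite big_nat_recr //= YE ltnn; congr (_ + _).
  by apply: eq_big_nat => i /andP[_ hi]; rewrite YE hi.
have feas : feasible n rI r0 v1 v2 wI wV l (Dstar n rI v2 wI l) (Ystar n r0 v1 v2 wI wV l).
  have lp : forall i, (1 <= i)%N -> (i < n)%N -> 0 <= l i.
    by move=> i h1 h2; apply: lpos; rewrite h1 /=; case: (n) h2 => //.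
  have Dle : forall i, (1 <= i <= n)%N -> Dstar n rI v2 wI l i <= 2 * rI / v2 * wI.
    move=> i _; rewrite /Dstar; case: ifP => _ //.
    by apply: ler_wpM2r; [lra|apply: ler_wpM2r; [rewrite invr_ge0; lra| rewrite ge_min lexx orbT]].
  have Yle : forall i, (1 <= i <= n)%N -> Ystar n r0 v1 v2 wI wV l i <= c.
    by move=> i _; rewrite YE; case: ifP => _ //; rewrite ge_min lexx orbT.
  split.
    move=> i /andP[h1 h2]; split; last by apply: Dle; rewrite h1.
    rewrite /Dstar; case: ifP => hi.
      apply: mulr_ge0; last lra; apply: divr_ge0; last lra.
      rewrite le_min lp //; lra.
    apply: mulr_ge0; last lra; apply: divr_ge0; lra.
  split.
    move=> k1 k2 h1 h12 h2n.
    rewrite big_nat_recr //= mulrDl mulrDl; apply: lerD; last first.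
      by apply: Dle; rewrite h2n (leq_trans h1 h12).
    rewrite mulr_suml mulr_suml; apply: ler_sum_nat => i /andP[_ hi].
    by rewrite /Dstar (leq_trans hi h2n).
  split.
    move=> i /andP[h1 h2]; split; last by apply: Yle; rewrite h1.
    rewrite YE; case: ifP => hi //.
    rewrite le_min cp andbT; apply: mulr_ge0; last lra.
    apply: divr_ge0; [exact: lp|lra].
  split.
    move=> i /andP[h1 h2]; rewrite YE /Dstar; case: ifP => hi; last exact/ltW.
    have li := lp i h1 hi.
    case: (leP (l i) (2 * rI)) => hl.
      by rewrite ge_min lexx.
    rewrite ge_min; apply/orP; right; exact/ltW.
  move=> k1 k2 h1 h12 h2n.
  rewrite big_nat_recr //= mulrDl mulrDl; apply: lerD; last first.
    by apply: Yle; rewrite h2n (leq_trans h1 h12).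
  rewrite mulr_suml mulr_suml; apply: ler_sum_nat => i /andP[hi1 hi].
  have hin : (i < n)%N by apply: leq_trans hi h2n.
  have li := lp i (leq_trans h1 hi1) hin.
  rewrite YE hin.
  case: (leP (l i) (2 * r0)) => hl.
    rewrite ge_min; apply/orP; left.
    rewrite mulrAC [l i / _ * _]mulrAC -!mulrA; apply: ler_wpM2l => //.
  by rewrite ge_min /c lexx orbT.
split; last by split.
move=> M HM; have := HM _ _ feas; by rewrite obj.
Qed.
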